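(* Every concatenated stabiliser code family has infinite disjointness, i.e. $\lim_{l\to\infty}\Delta(l)=\infty$, where $\Delta(l)$ is the disjointness of the $l$-th code of the family.
   Context: A concatenated stabiliser code family is built from a sequence of non-trivial $[[n_i,1,d_i]]$ stabiliser quantum error-correcting codes ($i\in\mathbb{N}$) with $n_i$ bounded by a constant independent of $i$: the $l$-th code $\mathcal{C}_l$ is the $[[\prod_{i=1}^l n_i,1,\prod_{i=1}^l d_i]]$ code obtained by concatenating the first $l$ codes of the sequence (each physical qubit at one level is encoded into a block of the next code). Disjointness: for an integer $c\ge1$, a collection of representatives of a logical operator is $c$-disjoint if no physical qubit lies in the support of more than $c$ of them; the unnormalised $c$-disjointness $\Delta'_c$ is the largest integer such that every logical Pauli operator admits at least $\Delta'_c$ representatives forming a $c$-disjoint collection; $\Delta_c=\Delta'_c/c$, and the disjointness is $\Delta=\max_{c\in\mathbb{Z}_+}\Delta_c$. *)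

(* Defs.v *)
From HB Require Import structures.
From mathcomp Require Import all_boot all_order all_algebra.

Set Implicit Arguments.
Unset Strict Implicit.
Unset Printing Implicit Defensive.

Import Order.TTheory GRing.Theory Num.Theory.
Local Open Scope ring_scope.

(* Pauli operator on N qubits, modulo phase: X^x Z^z. *)
Definition pauli (N : nat) := ('rV['F_2]_N * 'rV['F_2]_N)%type.

(* product of Pauli operators (modulo phase) *)
Definition padd N (p q : pauli N) : pauli N := (p.1 + q.1, p.2 + q.2).

Definition pid N : pauli N := (0, 0).

(* symplectic form: 0 iff p and q commute *)
Definition symp N (p q : pauli N) : 'F_2 :=
  \sum_(i < N) (p.1 0 i * q.2 0 i + p.2 0 i * q.1 0 i).

Definition supp N (p : pauli N) : {set 'I_N} :=
  [set i | (p.1 0 i != 0) || (p.2 0 i != 0)].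
Definition weight N (p : pauli N) : nat := #|supp p|.

(* A stabiliser code encoding one logical qubit, together with a choice of
   logical X and logical Z (needed to define concatenation). *)
Record stab_code (N : nat) := StabCode {
  stab : {set pauli N};
  logX : pauli N;
  logZ : pauli N }.

(* normaliser (= centraliser modulo phase) of the stabiliser group *)
Definition normalizer N (C : stab_code N) : {set pauli N} :=
  [set p | [forall s in stab C, symp p s == 0]].

(* C is an [[N,1]] stabiliser code: the stabiliser group is an abelian group
   (modulo phase) with N-1 independent generators, and logX, logZ are
   anticommuting elements of its normaliser. *)
Definition is_stab_code_1 N (C : stab_code N) : Prop :=
  [/\ (0 < N)%N, pid N \in stab C,
      {in stab C &, forall p q, padd p q \in stab C},
      {in stab C &, forall p q, symp p q = 0}
    & #|stab C| = (2 ^ N.-1)%N ] /\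
  [/\ logX C \in normalizer C, logZ C \in normalizer C
    & symp (logX C) (logZ C) = 1].

Definition has_distance N (C : stab_code N) (d : nat) : Prop :=
  (exists2 p, p \in normalizer C :\: stab C & weight p = d) /\
  (forall p, p \in normalizer C :\: stab C -> (d <= weight p)%N).

(* Physical qubit (j, k) of the concatenated code (block j, qubit k of the
   inner code) is indexed by mxvec_index j k in 'I_(N * n). *)

(* image of an outer Pauli: on block j apply logical X^(x_j) Z^(z_j) of Cin *)
Definition encode N n (Cin : stab_code n) (p : pauli N) : pauli (N * n) :=
  (mxvec (\matrix_(j < N, k < n)
            (p.1 0 j * (logX Cin).1 0 k + p.2 0 j * (logZ Cin).1 0 k)),
   mxvec (\matrix_(j < N, k < n)
            (p.1 0 j * (logX Cin).2 0 k + p.2 0 j * (logZ Cin).2 0 k))).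

Definition blocks N n (f : {ffun 'I_N -> pauli n}) : pauli (N * n) :=
  (mxvec (\matrix_(j < N, k < n) (f j).1 0 k),
   mxvec (\matrix_(j < N, k < n) (f j).2 0 k)).

Definition concat N n (Cout : stab_code N) (Cin : stab_code n)
  : stab_code (N * n) :=
  StabCode
    [set q | [exists p in stab Cout, exists f : {ffun 'I_N -> pauli n},
                [forall j, f j \in stab Cin] &&
                (q == padd (encode Cin p) (blocks f))]]
    (encode Cin (logX Cout)) (encode Cin (logZ Cout)).

(* trivial code on one qubit (unit for concatenation) *)
Definition triv_code : stab_code 1 :=
  StabCode [set pid 1] (const_mx 1, 0) (0, const_mx 1).

Fixpoint prodn (n : nat -> nat) (l : nat) : nat :=
  match l with 0 => 1%N | l'.+1 => (prodn n l' * n l')%N end.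

(* the l-th code of the concatenated family: concatenation of C 0, ..., C (l-1)
   (outermost C 0, innermost C (l-1)); it has prod_{i<l} n i qubits. *)
Fixpoint cat_code (n : nat -> nat) (C : forall i, stab_code (n i)) (l : nat)
  : stab_code (prodn n l) :=
  match l with
  | 0 => triv_code
  | l'.+1 => concat (cat_code C l') (C l')
  end.

Definition reps N (C : stab_code N) (L : pauli N) : {set pauli N} :=
  [set padd L s | s in stab C].

Definition c_disjoint N (A : {set pauli N}) (c : nat) : bool :=
  [forall i : 'I_N, #|[set p in A | i \in supp p]| <= c]%N.

Definition max_disjoint_reps N (C : stab_code N) (L : pauli N) (c : nat) : nat :=
  \max_(A : {set pauli N} | (A \subset reps C L) && c_disjoint A c) #|A|.

(* unnormalised c-disjointness Delta'_c: minimum over the nontrivial logical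
   Pauli operators X, Z, Y (~ XZ modulo phase) *)
Definition udisj N (C : stab_code N) (c : nat) : nat :=
  minn (max_disjoint_reps C (logX C) c)
       (minn (max_disjoint_reps C (logZ C) c)
             (max_disjoint_reps C (padd (logX C) (logZ C)) c)).

Definition disj_c N (C : stab_code N) (c : nat) : rat := (udisj C c)%:R / c%:R.

(* Since Delta'_c <= #|pauli N| = 4^N, for
   c > 4^N we have Delta_c < 1 <= Delta_1 (or all Delta_c = 0 when the
   stabiliser set is empty), so the max may be taken over 1 <= c <= 4^N. *)
Definition disjointness N (C : stab_code N) : rat :=
  \big[Num.max/0]_(1 <= c < (4 ^ N).+1) disj_c C c.

(* Main.v *)
Require Import Defs.
From mathcomp Require Import all_boot all_order all_algebra.
From mathcomp Require Import zify ring.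
Import Order.TTheory GRing.Theory Num.Theory.
Local Open Scope ring_scope.
Set Implicit Arguments.
Unset Strict Implicit.
Unset Printing Implicit Defensive.


Lemma F2_cases (x : 'F_2) : x = 0 \/ x = 1.
Proof. case: x => [[|[|]] //] Hx; [left|right]; exact: val_inj. Qed.

Lemma F2_double (x : 'F_2) : x + x = 0.
Proof. by case: (F2_cases x) => ->; [rewrite addr0 | apply: val_inj]. Qed.

Lemma F2_10 : (1 : 'F_2) != 0.
Proof. by []. Qed.

Definition psc n (a : 'F_2) (p : pauli n) : pauli n := (a *: p.1, a *: p.2).

Lemma symp_sym n (p q : pauli n) : symp p q = symp q p.
Proof. by apply: eq_bigr => i _; rewrite addrC mulrC [q.2 0 i * _]mulrC. Qed.

Lemma sympDl n (p q r : pauli n) : symp (padd p q) r = symp p r + symp q r.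
Proof.
rewrite /symp -big_split /=; apply: eq_bigr => i _; rewrite !mxE.
by rewrite !mulrDl addrACA.
Qed.

Lemma sympDr n (p q r : pauli n) : symp r (padd p q) = symp r p + symp r q.
Proof. by rewrite symp_sym sympDl !(symp_sym r). Qed.

Lemma sympZl n a (p r : pauli n) : symp (psc a p) r = a * symp p r.
Proof.
rewrite /symp mulr_sumr; apply: eq_bigr => i _; rewrite !mxE.
by rewrite mulrDr !mulrA.
Qed.

Lemma symp_pp n (p : pauli n) : symp p p = 0.
Proof.
rewrite /symp big1 // => i _; by rewrite [p.2 0 i * _]mulrC F2_double.
Qed.

Lemma symp0l n (r : pauli n) : symp (pid n) r = 0.
Proof. by rewrite /symp big1 // => i _; rewrite !mxE !mul0r addr0. Qed.

Lemma padd_pid n (p : pauli n) : padd p (pid n) = p.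
Proof. by case: p => a b; rewrite /padd /= !addr0. Qed.

Lemma paddC n (p q : pauli n) : padd p q = padd q p.
Proof. by rewrite /padd addrC [p.2 + _]addrC. Qed.

Lemma paddA n (p q r : pauli n) : padd p (padd q r) = padd (padd p q) r.
Proof. by rewrite /padd /= !addrA. Qed.

Lemma padd_pp n (p : pauli n) : padd p p = pid n.
Proof.
rewrite /padd /pid; congr pair; apply/rowP => i; rewrite !mxE; exact: F2_double.
Qed.

Lemma paddI n (p q r : pauli n) : padd p q = padd p r -> q = r.
Proof.
move=> H; have := congr1 (padd p) H.
by rewrite !paddA padd_pp !(paddC (pid n)) !padd_pid.
Qed.

Definition blk N n (j : 'I_N) (q : pauli (N * n)) : pauli n :=
  (\row_k q.1 0 (mxvec_index j k), \row_k q.2 0 (mxvec_index j k)).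

Lemma pauli_ext N n (q q' : pauli (N * n)) :
  (forall j, blk j q = blk j q') -> q = q'.
Proof.
case: q q' => [a b] [a' b'] H; congr pair; apply/rowP => i;
  case/mxvec_indexP: i => j k; have := H j; case=> /rowP /(_ k) + /rowP /(_ k);
  rewrite !mxE //.
Qed.

Lemma blk_padd N n j (p q : pauli (N * n)) :
  blk j (padd p q) = padd (blk j p) (blk j q).
Proof. by rewrite /blk /padd /=; congr pair; apply/rowP => k; rewrite !mxE. Qed.

Definition sigma N n (Cin : stab_code n) (P : pauli N) (j : 'I_N) : pauli n :=
  padd (psc (P.1 0 j) (logX Cin)) (psc (P.2 0 j) (logZ Cin)).

Lemma blk_encode N n (Cin : stab_code n) (P : pauli N) j :
  blk j (encode Cin P) = sigma Cin P j.
Proof.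
by rewrite /blk /encode /sigma /psc /padd /=; congr pair; apply/rowP => k;
  rewrite !mxE mxvecE !mxE.
Qed.

Lemma blk_blocks N n (f : {ffun 'I_N -> pauli n}) j : blk j (blocks f) = f j.
Proof.
rewrite /blk /blocks /=; case E: (f j) => [a b]; congr pair; apply/rowP => k;
  by rewrite !mxE mxvecE !mxE E.
Qed.

Lemma blk_pid N n j : blk j (pid (N * n)) = pid n.
Proof. by rewrite /blk /pid; congr pair; apply/rowP => k; rewrite !mxE. Qed.

Lemma supp_blk N n (q : pauli (N * n)) j k :
  (mxvec_index j k \in supp q) = (k \in supp (blk j q)).
Proof. by rewrite /supp !inE !mxE. Qed.

Lemma encodeD N n (Cin : stab_code n) (p q : pauli N) :
  encode Cin (padd p q) = padd (encode Cin p) (encode Cin q).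
Proof.
apply: pauli_ext => j; rewrite blk_padd !blk_encode /sigma /psc /padd /=.
congr pair; apply/rowP => k; rewrite !mxE; ring.
Qed.


Lemma F2lemA (a b c e f g : 'F_2) :
  ((a, b) != (0, 0)) -> ((f, g) != (0, 0)) -> ((a, b) != (f, g)) ->
  ((c, e) != (f, g)) -> ((a + c, b + e) != (f, g)) ->
  (a * e + b * c == 0) && (a * g + b * f == 1).
Proof.
by case: (F2_cases a) => ->; case: (F2_cases b) => ->; case: (F2_cases c) => ->;
  case: (F2_cases e) => ->; case: (F2_cases f) => ->; case: (F2_cases g) => ->.
Qed.

Lemma F2lemB (f g : 'F_2) : ((f, g) != (0, 0)) ->
  exists a b : 'F_2, a * g + b * f = 1.
Proof.
case: (F2_cases f) => ->; case: (F2_cases g) => -> // _.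
- by exists 1, 0; rewrite mul0r mul1r addr0.
- by exists 0, 1; rewrite mul0r mul1r add0r.
- by exists 1, 0; rewrite mul0r mul1r addr0.
Qed.

Definition qc n (p : pauli n) (k : 'I_n) : 'F_2 * 'F_2 := (p.1 0 k, p.2 0 k).

Definition Ek n (k : 'I_n) (a b : 'F_2) : pauli n :=
  (\row_i (if i == k then a else 0), \row_i (if i == k then b else 0)).

Lemma symp_Ek n k a b (p : pauli n) : symp (Ek k a b) p = a * p.2 0 k + b * p.1 0 k.
Proof.
rewrite /symp (bigD1 k) //= big1 ?addr0; first by rewrite !mxE eqxx.
by move=> i /negbTE ik; rewrite !mxE ik !mul0r addr0.
Qed.

Lemma weight_Ek n k a b : (weight (@Ek n k a b) <= 1)%N.
Proof.
rewrite /weight; apply: leq_trans (_ : #|[set k]| <= 1)%N; last by rewrite cards1.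
apply: subset_leq_card; apply/subsetP => i; rewrite /supp !inE !mxE.
case: (i == k) => //=; by rewrite eqxx.
Qed.

Lemma qc_padd n (p q : pauli n) k :
  qc (padd p q) k = ((qc p k).1 + (qc q k).1, (qc p k).2 + (qc q k).2).
Proof. by rewrite /qc /padd /= !mxE. Qed.

Section Inner.
Variables (n : nat) (C : stab_code n).
Hypothesis pidS : pid n \in stab C.
Hypothesis addS : {in stab C &, forall p q, padd p q \in stab C}.
Hypothesis w1 : forall p, p \in normalizer C -> (weight p <= 1)%N -> p \in stab C.

Lemma cleaning sg k : sg \in normalizer C ->
  exists2 s, s \in stab C & qc s k = qc sg k.
Proof.
move=> Nsg.
case: (boolP [exists s in stab C, qc s k == qc sg k]).
  by case/exists_inP => s Ss /eqP h; exists s.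
move/exists_inP => noS; exfalso.
have v0 : (sg.1 0 k, sg.2 0 k) != (0, 0).
  apply/negP => /eqP [h1 h2]; apply: noS; exists (pid n) => //.
  by rewrite /qc !mxE h1 h2.
suff [a [b [Hn Hv]]] : exists a b, (forall s, s \in stab C ->
     a * s.2 0 k + b * s.1 0 k = 0) /\ a * sg.2 0 k + b * sg.1 0 k = 1.
  have EN : Ek k a b \in normalizer C.
    by rewrite inE; apply/forall_inP => s Ss; rewrite symp_Ek Hn.
  have ES := w1 EN (weight_Ek k a b).
  move: Nsg; rewrite inE => /forall_inP /(_ _ ES) /eqP.
  by rewrite symp_sym symp_Ek Hv.
case: (boolP [exists s in stab C, (s.1 0 k, s.2 0 k) != (0, 0)]).
- case/exists_inP => s Ss hn; exists (s.1 0 k), (s.2 0 k).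
  have key s' : s' \in stab C ->
      (s.1 0 k * s'.2 0 k + s.2 0 k * s'.1 0 k == 0) &&
      (s.1 0 k * sg.2 0 k + s.2 0 k * sg.1 0 k == 1).
    move=> Ss'; apply: F2lemA => //.
    + by apply/negP => /eqP [h1 h2]; apply: noS; exists s => //; rewrite /qc h1 h2.
    + by apply/negP => /eqP [h1 h2]; apply: noS; exists s' => //; rewrite /qc h1 h2.
    + apply/negP => /eqP [h1 h2]; apply: noS; exists (padd s s'); first exact: addS.
      by rewrite qc_padd /= h1 h2.
  split; first by move=> s' Ss'; case/andP: (key s' Ss') => /eqP.
  by case/andP: (key s Ss) => _ /eqP.
- move/exists_inP => all0; have [a [b Hab]] := F2lemB v0.
  exists a, b; split => // s Ss.
  have : ~~ ((s.1 0 k, s.2 0 k) != (0, 0)) by apply/negP => h; apply: all0; exists s.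
  by rewrite negbK => /eqP [-> ->]; rewrite !mulr0 addr0.
Qed.

Definition Kset k := [set u in stab C | qc u k == (0, 0)].

Lemma card_stab_K k : (#|stab C| <= 4 * #|Kset k|)%N.
Proof.
pose rep v := odflt (pid n) [pick w in stab C | qc w k == v].
pose phi u := (qc u k, padd (rep (qc u k)) u).
have repP u : u \in stab C -> rep (qc u k) \in stab C /\ qc (rep (qc u k)) k = qc u k.
  move=> Su; rewrite /rep; case: pickP => [w /andP[Sw /eqP]|/(_ u)] //=.
  by rewrite Su eqxx.
have inj : {in stab C &, injective phi}.
  move=> u u' Su Su' /pair_equal_spec [h1]; rewrite /= h1 => /paddI //.
have sub : [set phi u | u in stab C] \subset setX [set: 'F_2 * 'F_2] (Kset k).
  apply/subsetP => x /imsetP [u Su ->]; rewrite inE /= inE andTb inE.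
  have [Sr Qr] := repP u Su.
  rewrite addS //= qc_padd Qr /= !F2_double eqxx.
  by [].
have := subset_leq_card sub; rewrite card_in_imset // cardsX cardsT card_prod.
by rewrite card_Fp.
Qed.

Lemma cover_bound sg k : sg \in normalizer C ->
  (4 * #|[set u in stab C | k \in supp (padd sg u)]| <= 3 * #|stab C|)%N.
Proof.
move=> Nsg; have [s0 Ss0 Q0] := cleaning k Nsg.
set P := [set u | k \in supp (padd sg u)].
have E1 : (#|[set u in stab C | k \in supp (padd sg u)]| + #|stab C :\: P| = #|stab C|)%N.
  by rewrite setIdE -/P cardsID.
have E2 : (#|Kset k| <= #|stab C :\: P|)%N.
  rewrite -(card_in_imset (f := padd s0) (D := Kset k)); last first.
    by move=> u u' _ _ /paddI.
  apply: subset_leq_card; apply/subsetP => x /imsetP [u].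
  rewrite inE => /andP[Su /eqP Qu] ->.
  rewrite !inE addS //= andbT !mxE negb_or !negbK.
  move: Q0 Qu; rewrite /qc => -[h1 h2] [h3 h4].
  by rewrite h1 h2 h3 h4 !addr0 !F2_double !eqxx.
have := card_stab_K k; lia.
Qed.

End Inner.


Definition good M (C : stab_code M) (L : pauli M) (m c : nat) :=
  exists A : {set pauli M},
    [/\ A \subset reps C L, pid M \notin A, #|A| = m & c_disjoint A c].

Lemma pauli_ext1 N (P P' : pauli N) :
  (forall j, P.1 0 j = P'.1 0 j /\ P.2 0 j = P'.2 0 j) -> P = P'.
Proof.
case: P P' => [a b] [a' b'] H; congr pair; apply/rowP => j; by case: (H j).
Qed.

Section Step.
Variables (N n : nat) (Cout : stab_code N) (Cin : stab_code n).
Hypothesis pidS : pid n \in stab Cin.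
Hypothesis addS : {in stab Cin &, forall p q, padd p q \in stab Cin}.
Hypothesis w1 : forall p, p \in normalizer Cin -> (weight p <= 1)%N -> p \in stab Cin.
Hypothesis XN : logX Cin \in normalizer Cin.
Hypothesis ZN : logZ Cin \in normalizer Cin.
Hypothesis XZ : symp (logX Cin) (logZ Cin) = 1.

Definition fsel (P : pauli N) (u : pauli n) : {ffun 'I_N -> pauli n} :=
  [ffun j => if j \in supp P then u else pid n].

Definition Qop (P : pauli N) (u : pauli n) : pauli (N * n) :=
  padd (encode Cin P) (blocks (fsel P u)).

Lemma blk_Qop P u j : blk j (Qop P u) = padd (sigma Cin P j) (fsel P u j).
Proof. by rewrite /Qop blk_padd blk_encode blk_blocks. Qed.

Lemma normal_symp p s : p \in normalizer Cin -> s \in stab Cin -> symp p s = 0.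
Proof. by rewrite inE => /forall_inP H /H /eqP. Qed.

Lemma fsel_stab P u j : u \in stab Cin -> fsel P u j \in stab Cin.
Proof. by rewrite ffunE; case: ifP. Qed.

Lemma decode (P : pauli N) (u : pauli n) (j : 'I_N) : u \in stab Cin ->
  symp (blk j (Qop P u)) (logZ Cin) = P.1 0 j /\
  symp (blk j (Qop P u)) (logX Cin) = P.2 0 j.
Proof.
move=> Su; have Sf := fsel_stab P j Su.
rewrite blk_Qop /sigma !sympDl !sympZl !symp_pp.
rewrite (symp_sym (fsel P u j)) (normal_symp ZN Sf).
rewrite (symp_sym (fsel P u j)) (normal_symp XN Sf) (symp_sym (logZ Cin)) XZ.
by split; ring.
Qed.

Lemma sigma_normal (P : pauli N) (j : 'I_N) : sigma Cin P j \in normalizer Cin.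
Proof.
rewrite inE; apply/forall_inP => s Ss; rewrite /sigma sympDl !sympZl.
by rewrite (normal_symp XN Ss) (normal_symp ZN Ss) !mulr0 addr0.
Qed.

Lemma sigma0 (P : pauli N) (j : 'I_N) : j \notin supp P -> sigma Cin P j = pid n.
Proof.
rewrite /supp inE negb_or !negbK => /andP[/eqP h1 /eqP h2].
rewrite /sigma /psc h1 h2 /padd /pid /=; congr pair; apply/rowP => k;
  by rewrite !mxE !mul0r addr0.
Qed.

Lemma Qop_eqP (P P' : pauli N) (u u' : pauli n) : u \in stab Cin -> u' \in stab Cin ->
  Qop P u = Qop P' u' -> P = P'.
Proof.
move=> Su Su' E; apply: pauli_ext1 => j.
have [h1 h2] := decode P j Su; have [h1' h2'] := decode P' j Su'.
by rewrite -h1 -h2 -h1' -h2' E.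
Qed.

Lemma Qop_nz (P : pauli N) (u : pauli n) : u \in stab Cin -> P != pid N -> Qop P u != pid (N * n).
Proof.
move=> Su; apply: contra => /eqP E; apply/eqP; apply: pauli_ext1 => j.
have [h1 h2] := decode P j Su; rewrite E blk_pid !symp0l in h1 h2.
by rewrite -h1 -h2 /pid !mxE.
Qed.

Lemma supp_nonempty (P : pauli N) : P != pid N -> exists j, j \in supp P.
Proof.
move=> nz; case: (boolP [exists j, j \in supp P]) => [/existsP //|].
move/existsPn => H; case/eqP: nz; apply: pauli_ext1 => j.
move: (H j); rewrite /supp inE negb_or !negbK => /andP[/eqP -> /eqP ->].
by rewrite /pid !mxE.
Qed.

Lemma Qop_inj (A : {set pauli N}) : pid N \notin A ->
  {in setX A (stab Cin) &, injective (fun x => Qop x.1 x.2)}.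
Proof.
move=> nA [P u] [P' u']; rewrite !inE /= => /andP[AP Su] /andP[AP' Su'] E.
have EP := Qop_eqP Su Su' E; subst P'.
have [j jP] : exists j, j \in supp P.
  by apply: supp_nonempty; apply: contraNneq nA => <-.
have := congr1 (blk j) E; rewrite !blk_Qop !ffunE jP => /paddI ->.
by [].
Qed.

Lemma Qop_reps (L P : pauli N) (u : pauli n) : P \in reps Cout L -> u \in stab Cin ->
  Qop P u \in reps (concat Cout Cin) (encode Cin L).
Proof.
case/imsetP => s Ss -> Su; apply/imsetP.
exists (padd (encode Cin s) (blocks (fsel (padd L s) u))).
  rewrite inE; apply/exists_inP; exists s => //; apply/existsP.
  exists (fsel (padd L s) u); rewrite eqxx andbT.
  by apply/forallP => j; apply: fsel_stab.
by rewrite /Qop encodeD paddA.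
Qed.

Lemma Qop_supp (P : pauli N) (u : pauli n) (j : 'I_N) (k : 'I_n) : u \in stab Cin ->
  (mxvec_index j k \in supp (Qop P u)) =
  (j \in supp P) && (k \in supp (padd (sigma Cin P j) u)).
Proof.
move=> Su; rewrite supp_blk blk_Qop ffunE; case: ifP => // jP.
rewrite sigma0 ?jP // padd_pid /supp inE /pid !mxE.
by rewrite eqxx.
Qed.

Lemma step (L : pauli N) (m c : nat) : (1 < #|stab Cin|)%N -> good Cout L m c ->
  good (concat Cout Cin) (encode Cin L) (m * #|stab Cin|)
       (c * ((3 * #|stab Cin|) %/ 4)).
Proof.
move=> S2 [A [sA nA cA dA]].
set S := stab Cin.
exists [set Qop x.1 x.2 | x in setX A S]; split.
- apply/subsetP => q /imsetP [[P u]]; rewrite inE /= => /andP[AP Su] ->.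
  exact: Qop_reps (subsetP sA _ AP) Su.
- apply/imsetP => -[[P u]]; rewrite inE /= => /andP[AP Su] /esym /eqP.
  apply/negP; apply: Qop_nz Su _; by apply: contraNneq nA => <-.
- by rewrite card_in_imset ?cardsX ?cA //; apply: Qop_inj.
- apply/forallP => i; case/mxvec_indexP: i => j k.
  set b := ((3 * #|S|) %/ 4)%N.
  set T := [set x in setX A S | mxvec_index j k \in supp (Qop x.1 x.2)].
  apply: (@leq_trans #|T|).
    apply: leq_trans (leq_imset_card (fun x => Qop x.1 x.2) T).
    apply: subset_leq_card; apply/subsetP => q; rewrite inE => /andP[/imsetP [x xAS ->] qs].
    by apply/imsetP; exists x => //; rewrite inE xAS.
  have -> : #|T| = (\sum_(P in A) \sum_(u | (u \in S) && (mxvec_index j k \in supp (Qop P u))) 1)%N.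
    rewrite pair_big_dep /= sum1dep_card; apply: eq_card => x; rewrite !inE.
    by rewrite andbA.
  apply: (@leq_trans (\sum_(P in A) (if j \in supp P then b else 0))%N).
    apply: leq_sum => P AP; rewrite sum1dep_card; case: ifP => jP.
    + rewrite leq_divRL // mulnC.
      have -> : #|[set u | (u \in S) && (mxvec_index j k \in supp (Qop P u))]| =
                #|[set u in S | k \in supp (padd (sigma Cin P j) u)]|.
        apply: eq_card => u; rewrite inE; symmetry; rewrite inE.
        case Su: (u \in S) => //=; by rewrite Qop_supp // jP.
      apply: cover_bound => //; exact: sigma_normal.
    + rewrite leqn0 cards_eq0; apply/eqP/setP => u; rewrite inE [RHS]inE.
      case Su: (u \in S) => //=; by rewrite Qop_supp // jP.
  rewrite -big_mkcondr /= (eq_bigl (fun P => P \in [set x in A | j \in supp x])); last first.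
    by move=> P; rewrite [RHS]inE.
  rewrite sum_nat_const.
  rewrite leq_mul2r; apply/orP; right.
  by move/forallP: dA => /(_ j).
Qed.

End Step.


Lemma pow_bound l : (3 ^ l * (3 + l) <= 3 * 4 ^ l)%N.
Proof.
elim: l => [//|l IH]; rewrite !expnS.
move: IH; set a := (3 ^ l)%N; set b := (4 ^ l)%N => IH.
nia.
Qed.

Lemma step_arith l m c S q : (4 ^ l * c <= 3 ^ l * m)%N -> (q * 4 <= 3 * S)%N ->
  (4 ^ l.+1 * (c * q) <= 3 ^ l.+1 * (m * S))%N.
Proof.
move=> H1 H2; rewrite !expnS.
have := leq_mul H1 H2.
have -> : (4 * 4 ^ l * (c * q) = 4 ^ l * c * (q * 4))%N by ring.
have -> : (3 * 3 ^ l * (m * S) = 3 ^ l * m * (3 * S))%N by ring.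
by [].
Qed.

Lemma good_triv (L : pauli 1) : L != pid 1 -> good triv_code L 1 1.
Proof.
move=> nz; exists [set L]; split.
- rewrite sub1set; apply/imsetP; exists (pid 1); first by rewrite inE.
  by rewrite padd_pid.
- by rewrite inE eq_sym.
- by rewrite cards1.
- apply/forallP => i; apply: leq_trans (_ : #|[set L]| <= 1)%N; last by rewrite cards1.
  by apply: subset_leq_card; apply/subsetP => p; rewrite inE => /andP[].
Qed.

Definition inv_at N (C : stab_code N) (l : nat) :=
  exists m c, [/\ (0 < c)%N, (4 ^ l * c <= 3 ^ l * m)%N,
    good C (logX C) m c, good C (logZ C) m c & good C (padd (logX C) (logZ C)) m c].

Lemma inner_props n (C : stab_code n) d :
  is_stab_code_1 C -> has_distance C d -> (1 < d)%N ->
  [/\ pid n \in stab C, {in stab C &, forall p q, padd p q \in stab C},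
      (forall p, p \in normalizer C -> (weight p <= 1)%N -> p \in stab C),
      (1 < #|stab C|)%N &
      [/\ logX C \in normalizer C, logZ C \in normalizer C &
          symp (logX C) (logZ C) = 1]].
Proof.
move=> [[n0 pidS addS _ cardS] [XN ZN XZ]] [[p0 p0N wp0] dist] d1; split => //.
- move=> p pN wp; apply/negPn/negP => pS.
  have := dist p; rewrite inE pS pN => /(_ isT) dp; lia.
- have wn : (weight p0 <= n)%N.
    by rewrite /weight; apply: leq_trans (max_card _) _; rewrite card_ord.
  rewrite cardS; have : (1 <= n.-1)%N by lia.
  move=> h; apply: leq_trans (_ : 2 ^ 1 <= 2 ^ n.-1)%N => //.
  by rewrite leq_pexp2l.
Qed.

Lemma inv_cat (n d : nat -> nat) (C : forall i, stab_code (n i)) :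
  (forall i, is_stab_code_1 (C i) /\ has_distance (C i) (d i) /\ (1 < d i)%N) ->
  forall l, inv_at (cat_code C l) l.
Proof.
move=> H; elim=> [|l [m [c [c0 Hmc gX gZ gY]]]].
  exists 1%N, 1%N; split => //; apply: good_triv; apply/eqP => -[];
    move/rowP/(_ 0); rewrite !mxE //.
have [h1 [h2 h3]] := H l.
have [pidS addS w1 S2 [XN ZN XZ]] := inner_props h1 h2 h3.
have q0 : (0 < (3 * #|stab (C l)|) %/ 4)%N by rewrite divn_gt0 //; lia.
exists (m * #|stab (C l)|)%N, (c * ((3 * #|stab (C l)|) %/ 4))%N; split.
- by rewrite muln_gt0 c0.
- by apply: step_arith => //; apply: leq_trunc_div.
- exact: step.
- exact: step.
- rewrite /= -encodeD; exact: step.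
Qed.

Lemma good_mdr N (C : stab_code N) L m c : good C L m c -> (0 < c)%N ->
  (m <= max_disjoint_reps C L (minn c m))%N.
Proof.
move=> [A [sA nA cA dA]] c0; rewrite /max_disjoint_reps -cA.
apply: (leq_bigmax_cond (F := fun A : {set pauli N} => #|A|)); rewrite sA /=.
apply/forallP => i; rewrite leq_min; apply/andP; split.
  by move/forallP: dA => /(_ i).
by apply: subset_leq_card; apply/subsetP => p; rewrite inE => /andP[].
Qed.

Lemma card_pauli N : #|{: pauli N}| = (4 ^ N)%N.
Proof. by rewrite card_prod card_mx card_Fp // mul1n -expnMn. Qed.

Lemma disj_ge N (C : stab_code N) c : (1 <= c <= 4 ^ N)%N ->
  disj_c C c <= disjointness C.
Proof.
move=> hc; rewrite /disjointness.
apply: (le_bigmax_seq 0 c predT (disj_c C)) => //.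
by rewrite mem_index_iota ltnS.
Qed.

Unset Implicit Arguments.

Theorem theorem3 (n d : nat -> nat) (C : forall i, stab_code (n i)) :
  (exists B : nat, forall i, (n i <= B)%N) ->
  (forall i, is_stab_code_1 (C i) /\ has_distance (C i) (d i) /\ (1 < d i)%N) ->
  forall M : rat, exists l0 : nat, forall l : nat, (l0 <= l)%N ->
    M <= disjointness (cat_code C l).
Proof.
move=> _ H M.
have [K HK] : exists K : nat, M <= K%:R.
  exists (Num.Def.archi_bound `|M|).
  exact: le_trans (ler_norm M) (ltW (archi_boundP (normr_ge0 M))).
exists (3 * K)%N => l Hl.
have [m [c [c0 Hmc gX gZ gY]]] := inv_cat H l.
have Kc : (K * c <= m)%N.
  have := pow_bound l; move: Hmc.
  have : (0 < 3 ^ l)%N by rewrite expn_gt0.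
  set a := (3 ^ l)%N; set b := (4 ^ l)%N; nia.
have m0 : (0 < m)%N.
  move: Hmc; have : (0 < 4 ^ l)%N by rewrite expn_gt0.
  set a := (3 ^ l)%N; set b := (4 ^ l)%N; nia.
set c' := minn c m.
have c'0 : (0 < c')%N by rewrite leq_min c0 m0.
have hu : (m <= udisj (cat_code C l) c')%N.
  by rewrite /udisj !leq_min !good_mdr.
have hd := @disj_ge _ (cat_code C l) c'.
apply: le_trans (hd _); last first.
  rewrite c'0 /=; apply: leq_trans (geq_minr _ _) _.
  case: gX => A [_ _ <- _]; rewrite -card_pauli; exact: max_card.
apply: le_trans HK _; rewrite /disj_c ler_pdivlMr ?ltr0n // -natrM ler_nat.
apply: leq_trans hu; apply: leq_trans Kc; rewrite leq_mul2l geq_minl orbT //.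
Qed.
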